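(* Let $(E,\vdash)$ be a pure event structure and let $x,y$ be left-closed configurations of it. Then the following are equivalent: (i) $x\subseteq y$ and for every $Z\subseteq y$ there is $W\subseteq x$ with $W\vdash Z$; (ii) $x\subseteq y$ and every set $Z$ with $x\subseteq Z\subseteq y$ is a left-closed configuration of $(E,\vdash)$.
   Context: An event structure is a pair $(E,\vdash)$ with $\vdash\subseteq\mathcal{P}(E)\times\mathcal{P}(E)$; it is pure if $X\vdash Y$ implies $X\cap Y=\emptyset$. A set $X\subseteq E$ is a left-closed configuration iff for every $Y\subseteq X$ there exists $Z\subseteq X$ with $Z\vdash Y$. (Condition (i) is the step transition relation of the event structure; condition (ii) is the step transition relation of the configuration structure formed by its left-closed configurations.) *)

(* Defs.v *)
Definition set (E : Type) := E -> Prop.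
Definition subset {E : Type} (X Y : set E) : Prop := forall e, X e -> Y e.
Definition disjoint {E : Type} (X Y : set E) : Prop := forall e, X e -> Y e -> False.

(* An event structure (E, |-) is given by its enabling relation on subsets. *)
Definition enabling (E : Type) := set E -> set E -> Prop.

Definition pure {E : Type} (ent : enabling E) : Prop :=
  forall X Y, ent X Y -> disjoint X Y.

Definition left_closed_conf {E : Type} (ent : enabling E) (X : set E) : Prop :=
  forall Y, subset Y X -> exists Z, subset Z X /\ ent Z Y.

(* Main.v *)
Require Import Defs.

Theorem mainTheorem10 (E : Type) (ent : enabling E) (x y : set E) :
  pure ent ->
  left_closed_conf ent x ->
  left_closed_conf ent y ->
  ((subset x y /\ forall Z, subset Z y -> exists W, subset W x /\ ent W Z)
   <->
   (subset x y /\ forall Z, subset x Z -> subset Z y -> left_closed_conf ent Z)).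
Proof.
  intros Hp Hx Hy; split.
  - intros [Hxy H]; split; [exact Hxy|].
    intros Z HxZ HZy Y HYZ.
    destruct (H Y (fun e h => HZy e (HYZ e h))) as [W [HW Hent]].
    exists W; split; [intros e h; apply HxZ, HW, h | exact Hent].
  - intros [Hxy H]; split; [exact Hxy|].
    intros Z HZy.
    assert (Hl : left_closed_conf ent (fun e => x e \/ Z e)).
    { apply H; [intros e h; left; exact h|].
      intros e [h|h]; [apply Hxy, h | apply HZy, h]. }
    destruct (Hl Z (fun e h => or_intror h)) as [W [HW Hent]].
    exists W; split; [|exact Hent].
    intros e h. destruct (HW e h) as [h'|h']; [exact h'|].
    exfalso; exact (Hp W Z Hent e h h').
Qed.
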